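(* Let $m\geq 2$ be an integer, $q$ an odd prime power and $n=\frac{q^m+1}{2}$. Then the largest odd coset leader modulo $q^m+1$ is $\delta_1=n$ if $q^m\equiv 1\pmod 4$, and $\delta_1=\frac{(q-1)n}{q+1}$ if $q^m\equiv 3\pmod 4$. Moreover, $|C_{\delta_1}^{(q,q^m+1)}|=1$ if $q^m\equiv 1\pmod 4$ and $|C_{\delta_1}^{(q,q^m+1)}|=2$ if $q^m\equiv 3\pmod 4$.
   Context: $C_i^{(q,N)}=\{i,iq,iq^2,\ldots\}\bmod N$ denotes the $q$-cyclotomic coset of $i$ modulo $N$; its smallest element is its coset leader. An odd coset leader modulo $N$ is a coset leader that is an odd integer. *)

(* Defs.v *)
From mathcomp Require Import all_boot.
From mathcomp Require Import boolp.
Set Implicit Arguments. Unset Strict Implicit. Unset Printing Implicit Defensive.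

Definition cyc_coset (q N i : nat) : {set 'I_N} :=
  [set x : 'I_N | `[< exists j : nat, nat_of_ord x = (i * q ^ j) %% N >]].

Definition coset_leader (q N i : nat) : Prop :=
  i < N /\ forall j : nat, i <= (i * q ^ j) %% N.

Definition odd_coset_leader (q N i : nat) : Prop :=
  coset_leader q N i /\ odd i.

Definition largest_odd_coset_leader (q N d : nat) : Prop :=
  odd_coset_leader q N d /\ forall i, odd_coset_leader q N i -> i <= d.

Definition prime_power (q : nat) : Prop :=
  exists p k : nat, prime p /\ 0 < k /\ q = p ^ k.

(* Main.v *)
Require Import Defs.
From mathcomp Require Import all_boot.
From mathcomp Require Import boolp.
From mathcomp Require Import zify ring.

Lemma lemA (q m N i : nat) : q ^ m + 1 = N -> 0 < i -> coset_leader q N i ->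
  forall j, i <= (i * q ^ j) %% N /\ (i * q ^ j) %% N + i <= N.
Proof.
move=> hN hi [hiN hl] j; have h0 := hl j; split => //.
have := hl (j + m); rewrite expnD mulnA -modnMml.
set r := (i * q ^ j) %% N.
have rN : r < N by rewrite ltn_mod; lia.
have -> : r * q ^ m = (r - 1) * N + (N - r) by nia.
rewrite modnMDl modn_small; lia.
Qed.

Lemma modX (x N c : nat) : (x + N * c) %% N = x %% N.
Proof. by rewrite addnC mulnC modnMDl. Qed.

Lemma lemB (x N q c : nat) : x * q = x + N * c -> forall j, (x * q ^ j) %% N = x %% N.
Proof.
move=> h; elim=> [|j IH]; first by rewrite expn0 muln1.
by rewrite expnSr mulnA -modnMml IH modnMml h modX.
Qed.

Lemma lemC (q S : nat) : 2 <= q -> forall d t, S - t = d -> 1 <= t -> t < S ->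
  exists k, S <= t * q ^ k /\ t * q ^ k < q * S.
Proof.
move=> hq; elim/ltn_ind => d IH t hd ht htS.
case: (leqP S (t * q)) => h.
  by exists 1; rewrite expn1; split => //; nia.
have [k [h1 h2]] := IH (S - t * q) ltac:(nia) (t * q) erefl ltac:(nia) h.
by exists k.+1; rewrite expnS mulnA.
Qed.

Lemma lemT (a l : nat) : exists T, (4*a+3) ^ (2*l+1) + 1 = (4*a+4) * (1 + (4*a+2)*T).
Proof.
elim: l => [|l [T IH]]; first by exists 0; rewrite expn1; lia.
exists ((4*a+3)^2 * T + (4*a+3)).
have -> : 2 * l.+1 + 1 = 2 + (2 * l + 1) by lia.
rewrite expnD; move: IH; set P := _ ^ (2 * l + 1) => IH.
rewrite expnS expn1 in IH *; nia.
Qed.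

Lemma fin (n N S QS i r t : nat) : N = 2*n -> QS + S = N -> n < i + S -> i < n ->
  i <= r -> r + i <= N -> S <= t -> t < QS -> (r + t) %% N = n -> False.
Proof.
move=> h1 h2 h3 h4 h5 h6 h7 h8 h9.
have := divn_eq (r + t) N; rewrite h9.
case: ((r + t) %/ N) => [|d]; first by rewrite mul0n add0n; lia.
rewrite mulSn; lia.
Qed.

Theorem lemma26 (m q : nat) :
  2 <= m -> prime_power q -> odd q ->
  let N := q ^ m + 1 in
  let n := (q ^ m + 1) %/ 2 in
  (q ^ m %% 4 = 1 ->
     largest_odd_coset_leader q N n /\ #|cyc_coset q N n| = 1) /\
  (q ^ m %% 4 = 3 ->
     let d1 := (q - 1) * n %/ (q + 1) in
     largest_odd_coset_leader q N d1 /\ #|cyc_coset q N d1| = 2).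
Proof.
move=> hm _ hq N n; split.
- move=> h4.
  have hQ := divn_eq (q ^ m) 4; rewrite h4 in hQ.
  set c := q ^ m %/ 4 in hQ.
  have hn : n = 2 * c + 1.
    rewrite /n hQ (_ : c * 4 + 1 + 1 = 2 * (2 * c + 1)); last lia.
    by rewrite mulKn.
  have hNn : N = 2 * n by rewrite /N hn hQ; lia.
  have hnN : n < N by lia.
  have hb := odd_double_half q.
  rewrite hq in hb.
  have hnq : n * q = n + N * q./2 by rewrite -hb hNn; nia.
  have hr := @lemB _ _ _ _ hnq; rewrite modn_small // in hr.
  have hlead : coset_leader q N n by split => // j; rewrite hr.
  split; first split.
  + split => //; rewrite hn; by rewrite oddD oddM.
  + move=> i [hi _]; case: (posnP i) => [-> //|ip].
    have [_ h] := @lemA q m N i (erefl N) ip hi 0.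
    move: h; rewrite expn0 muln1 modn_small; [lia | by case: hi].
  + have -> : cyc_coset q N n = [set Ordinal hnN].
      apply/setP => x; rewrite inE in_set1; apply/asboolP/eqP.
        by move=> [j hj]; apply: val_inj; rewrite /= hj hr.
      by move=> ->; exists 0; rewrite /= expn0 muln1 modn_small.
    by rewrite cards1.
- move=> h4 d1.
  have q4 : q %% 4 = 3.
    have hb := odd_double_half q; rewrite hq in hb.
    have [h1|h3] : q %% 4 = 1 \/ q %% 4 = 3 by move: hb; rewrite -muln2 /=; lia.
      by have := modnXm m 4 q; rewrite h4 h1 exp1n.
    by [].
  have hq3 := divn_eq q 4; rewrite q4 in hq3; set a := q %/ 4 in hq3.
  have hmo : odd m.
    case hme: (odd m) => //; exfalso.
    have := modnXm m 4 q; rewrite h4 q4.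
    have := odd_double_half m; rewrite hme /= add0n => <-.
    by rewrite -muln2 mulnC expnM -modnXm /= exp1n.
  have hm2 := odd_double_half m; rewrite hmo in hm2.
  have [T hT] := lemT a m./2.
  have hS : 0 < 1 + (4 * a + 2) * T by lia.
  set S := 1 + (4 * a + 2) * T in hT hS.
  have hN : N = (4 * a + 4) * S.
    have hm' : 2 * m./2 + 1 = m by move: hm2; rewrite -muln2 /=; lia.
    by rewrite /N -hT hq3 hm' mulnC.
  have hn : n = (2 * a + 2) * S.
    rewrite /n -/N hN (_ : (4 * a + 4) * S = 2 * ((2 * a + 2) * S)); last lia.
    by rewrite mulKn.
  have hd : d1 = (2 * a + 1) * S.
    rewrite /d1 hn hq3 (_ : a * 4 + 3 - 1 = a * 4 + 2); last lia.
    rewrite (_ : (a * 4 + 2) * ((2 * a + 2) * S) = ((2 * a + 1) * S) * (a * 4 + 3 + 1)); last ring.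
    by rewrite mulnK; lia.
  rewrite hd; clear hd d1.
  set e := (2 * a + 3) * S.
  have hdN : (2 * a + 1) * S < N by rewrite hN ltn_pmul2r //; lia.
  have heN : e < N by rewrite hN /e ltn_pmul2r //; lia.
  have hr : forall j, (((2 * a + 1) * S) * q ^ j) %% N = (2 * a + 1) * S \/
                      (((2 * a + 1) * S) * q ^ j) %% N = e.
    elim=> [|j IH]; first by left; rewrite expn0 muln1 modn_small.
    rewrite expnSr mulnA -modnMml.
    case: IH => ->; [right|left].
      rewrite (_ : (2 * a + 1) * S * q = e + N * (2 * a)); last by rewrite /e hN hq3; ring.
      by rewrite modX modn_small.
    rewrite (_ : e * q = (2 * a + 1) * S + N * (2 * a + 2)); last by rewrite /e hN hq3; ring.
    by rewrite modX modn_small.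
  have hodd : odd ((2 * a + 1) * S).
    by rewrite oddM oddD oddM /= add0n oddM oddD oddM.
  split; first split.
  + split => //; split => // j; case: (hr j) => ->; rewrite /e // leq_pmul2r //; lia.
  + move=> i [hi hio]; rewrite leqNgt; apply/negP => hlt.
    have ip : 0 < i by lia.
    have [_ h0] := @lemA q m N i (erefl N) ip hi 0.
    move: h0; rewrite expn0 muln1 modn_small; last by case: hi.
    move=> h0.
    have hin : i < n.
      rewrite ltn_neqAle; apply/andP; split; last lia.
      apply/negP => /eqP hin; move: hio; rewrite hin hn oddM oddD oddM /=.
      by [].
    have hq2 : 2 <= q by lia.
    have ht1 : 1 <= n - i by lia.
    have ht2 : n - i < S by lia.
    have [k [hk1 hk2]] := @lemC q S hq2 (S - (n - i)) (n - i) erefl ht1 ht2.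
    have [hk3 hk4] := @lemA q m N i (erefl N) ip hi k.
    have hnq : n * q = n + N * (2 * a + 1) by rewrite hn hN hq3; ring.
    have hB := @lemB _ _ _ _ hnq k; rewrite (modn_small (_ : n < N)) in hB; last by rewrite hn hN ltn_pmul2r //; lia.
    set r := (i * q ^ k) %% N in hk3 hk4.
    have hX : (r + (n - i) * q ^ k) %% N = n.
      by rewrite modnDml -mulnDl subnKC ?hB //; lia.
    have hqS : q * S + S = N by rewrite hN hq3; ring.
    have hNn : N = 2 * n by rewrite hN hn; ring.
    have hlt' : n < i + S by rewrite hn; lia.
    exact: (@fin n N S (q * S) i r ((n - i) * q ^ k)).
  + have -> : cyc_coset q N ((2 * a + 1) * S) = [set Ordinal hdN; Ordinal heN].
      apply/setP => x; rewrite inE in_set2; apply/asboolP/idP.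
        move=> [j hj]; case: (hr j) => h; rewrite h in hj.
          by apply/orP; left; apply/eqP/val_inj.
        by apply/orP; right; apply/eqP/val_inj.
      case/orP => /eqP ->.
        by exists 0; rewrite /= expn0 muln1 modn_small.
      exists 1; rewrite /= expn1.
      rewrite (_ : (2 * a + 1) * S * q = e + N * (2 * a)); last by rewrite /e hN hq3; ring.
      by rewrite modX modn_small.
    rewrite cards2 (_ : (Ordinal hdN != Ordinal heN) = true) //; apply/negP => /eqP [] /eqP; rewrite eqn_pmul2r //; lia.
Qed.
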